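(* Let $d,s,k\in\mathbb{N}$ with $k\ge 2$, $d>2k$ and $1\le s\le \frac{d}{2k}$. Then there is at most one pair $(\phi,\mathbf{c})$, where $\phi=\alpha\phi_1+\beta\phi_2$ with real $\alpha,\beta>0$ and $\mathbf{c}\in\mathbb{R}^d$, such that the quadric $\{\mathbf{x}\in\mathbb{R}^d:\ \phi[\mathbf{x}-\mathbf{c}]=1\}$ passes through all vertices of $P^{d}_{s,2k}$.
   Context: $\mathbf{j}=(1,\dots,1)\in\mathbb{R}^d$, $\chi_S$ the indicator vector of $S\subseteq\{1,\dots,d\}$. $\phi_1[\mathbf{x}]=(\sum_i x_i)^2$, $\phi_2[\mathbf{x}]=\bigl|\mathbf{x}-\frac{\sum_i x_i}{d}\mathbf{j}\bigr|^2$. For $t\in\{s,s+1\}$, $\mathbf{V}^{d}_{t,2k}=\{\chi_S-\frac{t-1}{d-2k}\mathbf{j}:\ |S|=t\}$, and $P^{d}_{s,2k}=\operatorname{conv}(\mathbf{V}^{d}_{s,2k}\cup-\mathbf{V}^{d}_{s,2k}\cup\mathbf{V}^{d}_{s+1,2k}\cup-\mathbf{V}^{d}_{s+1,2k})$, whose vertex set is $\pm\mathbf{V}^{d}_{s,2k}\cup\pm\mathbf{V}^{d}_{s+1,2k}$. *)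

(* Defs.v *)
From HB Require Import structures.
From mathcomp Require Import all_boot all_order all_algebra.
From mathcomp Require Import reals.
Set Implicit Arguments. Unset Strict Implicit. Unset Printing Implicit Defensive.
Import Order.TTheory GRing.Theory Num.Theory.
Local Open Scope ring_scope.

Definition jvec (R : realType) (d : nat) : 'rV[R]_d := \row_(i < d) 1.

Definition chi (R : realType) (d : nat) (S : {set 'I_d}) : 'rV[R]_d :=
  \row_(i < d) (if i \in S then 1 else 0).

Definition csum (R : realType) (d : nat) (x : 'rV[R]_d) : R := \sum_(i < d) x 0 i.

Definition phi1 (R : realType) (d : nat) (x : 'rV[R]_d) : R := (csum x) ^+ 2.

Definition phi2 (R : realType) (d : nat) (x : 'rV[R]_d) : R :=
  \sum_(i < d) (x 0 i - csum x / d%:R) ^+ 2.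

Definition phi (R : realType) (d : nat) (a b : R) (x : 'rV[R]_d) : R :=
  a * phi1 x + b * phi2 x.

(* element of V^d_{t,2k} built from S : chi_S - (t-1)/(d-2k) j *)
Definition vpt (R : realType) (d k t : nat) (S : {set 'I_d}) : 'rV[R]_d :=
  chi R S - ((t%:R - 1) / (d%:R - (2 * k)%:R)) *: jvec R d.

(* v is a vertex of P^d_{s,2k}:  v in ±V^d_{s,2k} ∪ ±V^d_{s+1,2k} *)
Definition is_vertex (R : realType) (d s k : nat) (v : 'rV[R]_d) : Prop :=
  exists (t : nat) (S : {set 'I_d}),
    (t = s \/ t = s.+1) /\ #|S| = t /\ (v = vpt R k t S \/ v = - vpt R k t S).

Definition passes_through_vertices (R : realType) (d s k : nat) (a b : R)
  (c : 'rV[R]_d) : Prop :=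
  forall v, is_vertex s k v -> phi a b (v - c) = 1.

(* Main.v *)
Require Import Defs.
From HB Require Import structures.
From mathcomp Require Import all_boot all_order all_algebra.
From mathcomp Require Import reals.
From mathcomp Require Import ring lra zify.
Import Order.TTheory GRing.Theory Num.Theory.
Local Open Scope ring_scope.

Lemma exists_subset (T : finType) (A : {set T}) (n : nat) :
  (n <= #|A|)%N -> exists S : {set T}, S \subset A /\ #|S| = n.
Proof.
elim: n => [|n IH] h.
  by exists set0; split; [exact: sub0set | exact: cards0].
have [S [sSA cS]] := IH (ltnW h).
have : (0 < #|A :\: S|)%N by rewrite cardsD (setIidPr sSA) cS subn_gt0.
case/card_gt0P => x; rewrite inE => /andP [xS xA].
exists (x |: S); split; first by rewrite subUset sub1set xA sSA.
by rewrite cardsU1 xS cS.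
Qed.

Lemma csumD {R : realType} {d : nat} (x y : 'rV[R]_d) : csum (x + y) = csum x + csum y.
Proof. by rewrite /csum -big_split; apply: eq_bigr => i _; rewrite mxE. Qed.
Lemma csumN {R : realType} {d : nat} (x : 'rV[R]_d) : csum (- x) = - csum x.
Proof. by rewrite /csum -sumrN; apply: eq_bigr => i _; rewrite mxE. Qed.
Lemma csumZ {R : realType} {d : nat} (r : R) (x : 'rV[R]_d) : csum (r *: x) = r * csum x.
Proof. by rewrite /csum mulr_sumr; apply: eq_bigr => i _; rewrite mxE. Qed.
Lemma csum_chi {R : realType} {d : nat} (S : {set 'I_d}) : csum (chi R S) = #|S|%:R.
Proof.
rewrite /csum. under eq_bigr => i _ do rewrite mxE.
by rewrite -big_mkcond /= sumr_const.
Qed.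
Lemma csum_j {R : realType} {d : nat} : csum (jvec R d) = d%:R.
Proof.
rewrite /csum. under eq_bigr => i _ do rewrite mxE.
by rewrite sumr_const card_ord.
Qed.

Definition dot {R : realType} {d : nat} (x y : 'rV[R]_d) : R := \sum_(i < d) x 0 i * y 0 i.

Lemma dotDl {R : realType} {d : nat} (x y z : 'rV[R]_d) : dot (x + y) z = dot x z + dot y z.
Proof. by rewrite /dot -big_split; apply: eq_bigr => i _; rewrite mxE mulrDl. Qed.
Lemma dotNl {R : realType} {d : nat} (x z : 'rV[R]_d) : dot (- x) z = - dot x z.
Proof. by rewrite /dot -sumrN; apply: eq_bigr => i _; rewrite mxE mulNr. Qed.
Lemma dotZl {R : realType} {d : nat} (r : R) (x z : 'rV[R]_d) : dot (r *: x) z = r * dot x z.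
Proof. by rewrite /dot mulr_sumr; apply: eq_bigr => i _; rewrite mxE mulrA. Qed.
Lemma dotC {R : realType} {d : nat} (x z : 'rV[R]_d) : dot x z = dot z x.
Proof. by rewrite /dot; apply: eq_bigr => i _; rewrite mulrC. Qed.
Lemma dotDr {R : realType} {d : nat} (x y z : 'rV[R]_d) : dot z (x + y) = dot z x + dot z y.
Proof. by rewrite !(dotC z) dotDl. Qed.
Lemma dotNr {R : realType} {d : nat} (x z : 'rV[R]_d) : dot z (- x) = - dot z x.
Proof. by rewrite !(dotC z) dotNl. Qed.
Lemma dot_jl {R : realType} {d : nat} (x : 'rV[R]_d) : dot (jvec R d) x = csum x.
Proof. by rewrite /dot /csum; apply: eq_bigr => i _; rewrite mxE mul1r. Qed.
Lemma dot_chi {R : realType} {d : nat} (S : {set 'I_d}) (x : 'rV[R]_d) :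
  dot (chi R S) x = \sum_(l in S) x 0 l.
Proof.
rewrite /dot [RHS]big_mkcond /=; apply: eq_bigr => i _; rewrite mxE.
by case: ifP => _; rewrite ?mul1r ?mul0r.
Qed.

Lemma phiE {R : realType} {d : nat} (a b : R) (x : 'rV[R]_d) : (0 < d)%N ->
  phi a b x = a * csum x ^+ 2 + b * (dot x x - csum x ^+ 2 / d%:R).
Proof.
move=> d0; rewrite /phi /phi1 /phi2; congr (_ + b * _).
set m := csum x / d%:R.
have -> : \sum_(i < d) (x 0 i - m) ^+ 2 =
  \sum_(i < d) (x 0 i * x 0 i) + \sum_(i < d) (-(2 * m) * x 0 i) + \sum_(i < d) m ^+ 2.
  by rewrite -!big_split; apply: eq_bigr => i _ /=; ring.
rewrite -mulr_sumr sumr_const card_ord -/(dot x x) -/(csum x) /m.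
have dn : d%:R != 0 :> R by rewrite pnatr_eq0 -lt0n.
by field.
Qed.

Definition lam (R : realType) (d k t : nat) : R := (t%:R - 1) / (d%:R - (2 * k)%:R).

Lemma vptE (R : realType) (d k t : nat) (S : {set 'I_d}) :
  vpt R k t S = chi R S - lam R d k t *: jvec R d.
Proof. by []. Qed.

Lemma csum_vpt (R : realType) (d k t : nat) (S : {set 'I_d}) : #|S| = t ->
  csum (vpt R k t S) = t%:R - lam R d k t * d%:R.
Proof. by move=> cS; rewrite vptE csumD csumN csumZ csum_chi csum_j cS. Qed.

Lemma dot_vpt (R : realType) (d k t : nat) (S : {set 'I_d}) (x : 'rV[R]_d) :
  dot (vpt R k t S) x = \sum_(l in S) x 0 l - lam R d k t * csum x.
Proof. by rewrite vptE dotDl dotNl dotZl dot_chi dot_jl. Qed.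

Lemma dot_vpt_self (R : realType) (d k t : nat) (S : {set 'I_d}) : #|S| = t ->
  dot (vpt R k t S) (vpt R k t S) =
  t%:R * (1 - lam R d k t) - lam R d k t * (t%:R - lam R d k t * d%:R).
Proof.
move=> cS; rewrite dot_vpt csum_vpt //; congr (_ - _).
under eq_bigr => l lS do rewrite vptE !mxE lS mulr1.
by rewrite sumr_const cS mulr_natl.
Qed.

Lemma Bzero {R : realType} {d : nat} (a b : R) (v c : 'rV[R]_d) : (0 < d)%N ->
  phi a b (v - c) = 1 -> phi a b (- v - c) = 1 ->
  a * csum v * csum c + b * (dot v c - csum v * csum c / d%:R) = 0.
Proof.
move=> d0; rewrite !phiE // !csumD !csumN !dotDl !dotDr !dotNl !dotNr (dotC c v).
move=> H1 H2.
nra.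
Qed.

Definition sig (R : realType) (d k t : nat) : R := t%:R - lam R d k t * d%:R.
Definition qq (R : realType) (d t : nat) : R := t%:R - t%:R ^+ 2 / d%:R.

Lemma sol (R : realType) (d s k : nat)
  (hk : (2 <= k)%N) (hd : (2 * k < d)%N) (hs1 : (1 <= s)%N) (hs2 : (2 * k * s <= d)%N)
  (a b : R) (c : 'rV[R]_d) : 0 < a -> 0 < b ->
  passes_through_vertices s k a b c ->
  c = 0 /\ a * sig R d k s ^+ 2 + b * qq R d s = 1
        /\ a * sig R d k s.+1 ^+ 2 + b * qq R d s.+1 = 1.
Proof.
move=> a0 b0 P.
have d0 : (0 < d)%N by apply: leq_ltn_trans hd.
have dn : d%:R != 0 :> R by rewrite pnatr_eq0 -lt0n.
have mn : d%:R - (2 * k)%:R != 0 :> R.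
  by rewrite -natrB ?(ltnW hd) // pnatr_eq0 subn_eq0 -ltnNge.
have mn' : d%:R - 2 * k%:R != 0 :> R by rewrite -natrM.
have Hv : forall t (S : {set 'I_d}), (t = s \/ t = s.+1) -> #|S| = t ->
    phi a b (vpt R k t S - c) = 1 /\ phi a b (- vpt R k t S - c) = 1.
  move=> t S ht cS; split; apply: P; exists t, S; do 2 (split => //); [left|right] => //.
have HB : forall t (S : {set 'I_d}), (t = s \/ t = s.+1) -> #|S| = t ->
    a * csum (vpt R k t S) * csum c
    + b * (dot (vpt R k t S) c - csum (vpt R k t S) * csum c / d%:R) = 0.
  by move=> t S ht cS; have [h1 h2] := Hv t S ht cS; apply: Bzero.
have cc : forall i j : 'I_d, c 0 i = c 0 j.
  move=> i j; case: (eqVneq i j) => [->//|ij].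
  have [T [sT cT]] : exists T : {set 'I_d}, T \subset ~: [set i; j] /\ #|T| = s.-1.
    apply: exists_subset; rewrite cardsCs setCK cards2 ij card_ord.
    by rewrite /=; nia.
  have iT : i \notin T by apply/negP => /(subsetP sT); rewrite !inE eqxx.
  have jT : j \notin T by apply/negP => /(subsetP sT); rewrite !inE eqxx orbT.
  have ci : #|i |: T| = s by rewrite cardsU1 iT cT add1n prednK.
  have cj : #|j |: T| = s by rewrite cardsU1 jT cT add1n prednK.
  have := HB s _ (or_introl erefl) ci; have := HB s _ (or_introl erefl) cj.
  rewrite !dot_vpt !csum_vpt // !big_setU1 //=.
  move=> h1 h2.
  have : b * (c 0 i - c 0 j) = 0 by nra.
  by move/eqP; rewrite mulf_eq0 gt_eqF //= subr_eq0 => /eqP.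
set i0 : 'I_d := Ordinal d0.
set g := c 0 i0.
have ceq : c = g *: jvec R d by apply/rowP => i; rewrite !mxE (cc i i0) mulr1.
have [S1 [_ c1]] := @exists_subset _ [set: 'I_d] s
  ltac:(by rewrite cardsT card_ord; nia).
have [S2 [_ c2]] := @exists_subset _ [set: 'I_d] s.+1
  ltac:(by rewrite cardsT card_ord; nia).
have Hg : forall t (S : {set 'I_d}), (t = s \/ t = s.+1) -> #|S| = t ->
    g * sig R d k t = 0.
  move=> t S ht cS; have := HB t S ht cS.
  rewrite ceq (dotC _ (g *: _)) dotZl dot_jl csumZ csum_j csum_vpt // -/(sig R d k t).
  move=> h.
  have : a * d%:R * (g * sig R d k t) = 0.
    rewrite -h; field => //.
  by move/eqP; rewrite mulf_eq0 mulf_eq0 gt_eqF // (negPf dn) /= => /eqP.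
have g0 : g = 0.
  have h1 := Hg s S1 (or_introl erefl) c1.
  have h2 := Hg s.+1 S2 (or_intror erefl) c2.
  have : g * (sig R d k s - sig R d k s.+1) = 0 by rewrite mulrBr h1 h2 subrr.
  have -> : sig R d k s - sig R d k s.+1 = (2 * k)%:R / (d%:R - (2 * k)%:R).
    have e : s.+1%:R = s%:R + 1 :> R by rewrite -addn1 natrD.
    rewrite /sig /lam e; field => //.
  move/eqP; rewrite !mulf_eq0 invr_eq0 (negPf mn) orbF pnatr_eq0.
  have -> : (2 * k == 0)%N = false by apply/negbTE; rewrite -lt0n; nia.
  by rewrite orbF => /eqP.
have c0 : c = 0 by rewrite ceq g0 scale0r.
have Hq : forall t (S : {set 'I_d}), (t = s \/ t = s.+1) -> #|S| = t ->
    a * sig R d k t ^+ 2 + b * qq R d t = 1.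
  move=> t S ht cS; have [h _] := Hv t S ht cS.
  move: h; rewrite c0 subr0 phiE // dot_vpt_self // csum_vpt // -/(sig R d k t) => h.
  rewrite -h /qq /sig; congr (_ + b * _); field => //.
split => //; split; [exact: Hq s S1 (or_introl erefl) c1 | exact: Hq s.+1 S2 (or_intror erefl) c2].
Qed.

Lemma solve2 (R : realType) (A B C E a1 b1 a2 b2 : R) : E != B ->
  a1 * A + b1 * B = 1 -> a1 * C + b1 * E = 1 ->
  a2 * A + b2 * B = 1 -> a2 * C + b2 * E = 1 -> a1 = a2 /\ b1 = b2.
Proof.
move=> EB h1 h2 h3 h4.
have ea : forall x y : R, x * A + y * B = 1 -> x * C + y * E = 1 ->
    x * (A * E - B * C) = E - B /\ y * (A * E - B * C) = A - C.
  move=> x y g1 g2; split.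
    have -> : x * (A * E - B * C) = E * (x * A + y * B) - B * (x * C + y * E) by ring.
    by rewrite g1 g2 !mulr1.
  have -> : y * (A * E - B * C) = A * (x * C + y * E) - C * (x * A + y * B) by ring.
  by rewrite g1 g2 !mulr1.
have [e1 f1] := ea _ _ h1 h2; have [e2 f2] := ea _ _ h3 h4.
have D0 : A * E - B * C != 0.
  apply/negP => /eqP D0; move: e1; rewrite D0 mulr0 => /eqP.
  by rewrite eq_sym subr_eq0 (negPf EB).
split; apply: (mulIf D0); [by rewrite e1 e2 | by rewrite f1 f2].
Qed.

Theorem theorem7 (R : realType) (d s k : nat)
  (hk : (2 <= k)%N) (hd : (2 * k < d)%N) (hs1 : (1 <= s)%N) (hs2 : (2 * k * s <= d)%N)
  (a1 b1 a2 b2 : R) (c1 c2 : 'rV[R]_d) :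
  0 < a1 -> 0 < b1 -> 0 < a2 -> 0 < b2 ->
  passes_through_vertices s k a1 b1 c1 ->
  passes_through_vertices s k a2 b2 c2 ->
  (forall x : 'rV[R]_d, phi a1 b1 x = phi a2 b2 x) /\ c1 = c2.
Proof.
move=> pa1 pb1 pa2 pb2 P1 P2.
have [c10 [e11 e12]] := sol _ _ _ _ hk hd hs1 hs2 _ _ _ pa1 pb1 P1.
have [c20 [e21 e22]] := sol _ _ _ _ hk hd hs1 hs2 _ _ _ pa2 pb2 P2.
have d0 : (0 < d)%N by apply: leq_ltn_trans hd.
have dn : d%:R != 0 :> R by rewrite pnatr_eq0 -lt0n.
have EB : qq R d s.+1 != qq R d s.
  have e : s.+1%:R = s%:R + 1 :> R by rewrite -addn1 natrD.
  rewrite -subr_eq0.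
  have -> : qq R d s.+1 - qq R d s = (d%:R - (2 * s + 1)%:R) / d%:R.
    by rewrite /qq e natrD natrM; field.
  rewrite mulf_eq0 invr_eq0 (negPf dn) orbF -natrB; last by nia.
  by rewrite pnatr_eq0 subn_eq0 -ltnNge; nia.
have [-> ->] := solve2 _ _ _ _ _ _ _ _ _ EB e11 e12 e21 e22.
by split => //; rewrite c10 c20.
Qed.
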